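(* Let $\mathbb F$ be a field and $A=[a_{ij}],C=[c_{ij}]\in M_n(\mathbb F)$. Then $C=DAD^{-1}$ for some invertible diagonal matrix $D$ if and only if both of the following hold: (1) $a_{ij}\neq0$ if and only if $c_{ij}\neq0$, for all $i,j\in[n]$; (2) for every sequence $(i_1,\dots,i_p)$ ($p\ge1$) of distinct elements of $[n]$ such that, setting $i_{p+1}:=i_1$, at least one of $a_{i_ki_{k+1}}$ and $a_{i_{k+1}i_k}$ is nonzero for each $k\in[p]$, we have $$f_{i_1i_2}(A)\cdots f_{i_{p-1}i_p}(A)f_{i_pi_1}(A)=f_{i_1i_2}(C)\cdots f_{i_{p-1}i_p}(C)f_{i_pi_1}(C).$$
   Context: $[n]=\{1,\dots,n\}$. For $X=[x_{ij}]\in M_n(\mathbb F)$ and $i,j\in[n]$ define $f_{ij}(X)=x_{ij}$ if $x_{ij}\neq0$; $f_{ij}(X)=1/x_{ji}$ if $x_{ij}=0$ and $x_{ji}\ne0$; and $f_{ij}(X)=0$ if $x_{ij}=x_{ji}=0$. *)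

(* Defs.v *)
From HB Require Import structures.
From mathcomp Require Import all_boot all_order all_algebra.
Set Implicit Arguments. Unset Strict Implicit. Unset Printing Implicit Defensive.
Import GRing.Theory.
Local Open Scope ring_scope.

Definition fij (F : fieldType) (n : nat) (X : 'M[F]_n) (i j : 'I_n) : F :=
  if X i j != 0 then X i j
  else if X j i != 0 then (X j i)^-1
  else 0.

(* the k-th element of the cyclic sequence s (indices taken mod size s),
   so that i_{p+1} = i_1 *)
Definition cyc_nth (n : nat) (s : seq 'I_n) (i0 : 'I_n) (k : nat) : 'I_n :=
  nth i0 s (k %% size s).

Definition admissible_cycle (F : fieldType) (n : nat) (A : 'M[F]_n)
    (s : seq 'I_n) : Prop :=
  (0 < size s)%N /\ uniq s /\
  forall (i0 : 'I_n) (k : nat), (k < size s)%N ->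
    A (cyc_nth s i0 k) (cyc_nth s i0 k.+1) != 0 \/
    A (cyc_nth s i0 k.+1) (cyc_nth s i0 k) != 0.

Definition cycle_prod (F : fieldType) (n : nat) (X : 'M[F]_n)
    (s : seq 'I_n) (i0 : 'I_n) : F :=
  \prod_(k < size s) fij X (cyc_nth s i0 k) (cyc_nth s i0 k.+1).

(* Main.v *)
Require Import Defs.
From HB Require Import structures.
From mathcomp Require Import all_boot all_order all_algebra.
From mathcomp Require Import ring zify.
Import GRing.Theory.
Local Open Scope ring_scope.

Section Helpers.
Variables (F : fieldType) (n : nat).

Fixpoint Wp (X : 'M[F]_n) (x : 'I_n) (p : seq 'I_n) : F :=
  match p with [::] => 1 | y :: p' => fij X x y * Wp X y p' end.

Lemma Wp_cat (X : 'M[F]_n) x p1 p2 : Wp X x (p1 ++ p2) = Wp X x p1 * Wp X (last x p1) p2.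
Proof.
elim: p1 x => [|y p1 IH] x /=; first by rewrite mul1r.
by rewrite IH mulrA.
Qed.

Lemma Wp_big (X : 'M[F]_n) x p i0 :
  Wp X x p = \prod_(k < size p) fij X (nth i0 (x :: p) k) (nth i0 p k).
Proof.
elim: p x => [|y p IH] x /=; first by rewrite big_ord0.
by rewrite big_ord_recl /= IH.
Qed.

Lemma cyc_nth_lt (s : seq 'I_n) (i0 : 'I_n) k : (k < size s)%N -> cyc_nth s i0 k = nth i0 s k.
Proof. by move=> h; rewrite /cyc_nth modn_small. Qed.

Lemma cyc_nth_S (x : 'I_n) t i0 k : (k < (size t).+1)%N ->
  cyc_nth (x :: t) i0 k.+1 = nth i0 (rcons t x) k.
Proof.
move=> h; rewrite /cyc_nth /= nth_rcons.
case: (ltnP k (size t)) => hk.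
  by rewrite modn_small.
have -> : k = size t by apply/eqP; rewrite eqn_leq hk -ltnS h.
by rewrite modnn eqxx.
Qed.

Lemma cycle_prodE (X : 'M[F]_n) x t i0 : cycle_prod X (x :: t) i0 = Wp X x (rcons t x).
Proof.
rewrite (Wp_big _ _ _ i0) /cycle_prod size_rcons /=.
apply: eq_bigr => k _.
rewrite cyc_nth_lt // cyc_nth_S //.
have -> : x :: rcons t x = rcons (x :: t) x by [].
by rewrite [nth _ (rcons (x :: t) x) _]nth_rcons ltn_ord.
Qed.

Lemma last_take (x : 'I_n) p i : (i <= size p)%N ->
  last x (take i p) = nth x (x :: p) i.
Proof.
elim: p x i => [|y p IH] x [|i] //= h.
by rewrite IH // (set_nth_default x y).
Qed.

Lemma fij_nz (X : 'M[F]_n) i j : (X i j != 0) || (X j i != 0) -> fij X i j != 0.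
Proof.
rewrite /fij; case: ifP => //= h1; case: ifP => //= h2 _.
by rewrite invr_eq0 h2.
Qed.

Lemma fij_conj (A C : 'M[F]_n) (d : 'I_n -> F) :
  (forall i, d i != 0) -> (forall i j, C i j = d i * A i j / d j) ->
  forall i j, fij C i j = d i / d j * fij A i j.
Proof.
move=> dnz HC i j.
have nz : forall a b c : F, a != 0 -> c != 0 -> (a * b / c != 0) = (b != 0).
  move=> a b c ha hc; rewrite !mulf_eq0 invr_eq0 (negbTE ha) (negbTE hc).
  by rewrite orbF.
rewrite /fij !HC !nz //.
case: ifP => h1; first by field; rewrite dnz.
case: ifP => h2; last by rewrite mulr0.
by field; rewrite ?dnz ?h2.
Qed.


Lemma Wp_conj (A C : 'M[F]_n) (d : 'I_n -> F) :
  (forall i, d i != 0) -> (forall i j, C i j = d i * A i j / d j) ->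
  forall x p, Wp C x p = d x / d (last x p) * Wp A x p.
Proof.
move=> dnz HC x p; elim: p x => [|y p IH] x /=.
  by rewrite divff ?mulr1.
rewrite IH (fij_conj A C d dnz HC); field; rewrite ?dnz //.
Qed.

Section Closed.
Variables (A C : 'M[F]_n).
Hypothesis H1 : forall i j : 'I_n, A i j != 0 <-> C i j != 0.
Hypothesis H2 : forall (s : seq 'I_n) (i0 : 'I_n), admissible_cycle A s ->
      cycle_prod A s i0 = cycle_prod C s i0.
Definition ee : rel 'I_n := fun i j => (A i j != 0) || (A j i != 0).

Lemma edgeC i j : ee i j -> (C i j != 0) || (C j i != 0).
Proof. by case/orP => /H1 ->; rewrite ?orbT. Qed.

Lemma Wp_nzA x p : path ee x p -> Wp A x p != 0.
Proof.
elim: p x => [|y p IH] x /=; first by rewrite oner_neq0.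
by case/andP => h1 h2; rewrite mulf_neq0 ?IH ?fij_nz.
Qed.

Lemma Wp_nzC x p : path ee x p -> Wp C x p != 0.
Proof.
elim: p x => [|y p IH] x /=; first by rewrite oner_neq0.
by case/andP => h1 h2; rewrite mulf_neq0 ?IH ?fij_nz ?edgeC.
Qed.

Lemma closed_walk m : forall x p, (size p <= m)%N -> path ee x p -> last x p = x ->
  Wp A x p = Wp C x p.
Proof.
elim: m => [|m IH] x p.
  by case: p.
case/lastP: p => [//|t y] hs hp; rewrite last_rcons => yx; subst y.
case: (boolP (uniq (x :: t))) => hu.
  rewrite -!(cycle_prodE _ _ _ x); apply: H2.
  split => //; split => // i0 k hk.
  rewrite cyc_nth_lt // cyc_nth_S //.
  move/(pathP i0): hp => /(_ k); rewrite size_rcons => /(_ hk).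
  have -> : x :: rcons t x = rcons (x :: t) x by [].
  by rewrite [nth _ (rcons (x :: t) x) _]nth_rcons hk => /orP.
case/(uniqPn x): hu => i [j [hij hj heq]].
set p := rcons t x.
have hsp : size p = (size t).+1 by rewrite size_rcons.
set p1 := take i p; set p2 := take (j - i) (drop i p); set p3 := drop j p.
have hp123 : p = p1 ++ p2 ++ p3.
  by rewrite catA /p1 /p2 -takeD subnKC ?(ltnW hij) // cat_take_drop.
have np : forall k, nth x (x :: p) k = nth x (x :: t) k.
  by move=> k; rewrite -[RHS](nth_rcons_default x (x :: t)).
have l1 : last x p1 = nth x (x :: t) i.
  by rewrite last_take ?np // /p size_rcons; move: hij hj => /= ? ?; lia.
have l2 : last (last x p1) p2 = nth x (x :: t) i.
  rewrite -last_cat /p1 /p2 -takeD subnKC ?(ltnW hij) //.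
  by rewrite last_take ?np ?heq // /p size_rcons; move: hij hj => /= ? ?; lia.
have s2 : size p2 = (j - i)%N.
  rewrite size_takel // size_drop /p size_rcons; move: hij hj => /= ? ?; lia.
have s3 : size p3 = (size p - j)%N by rewrite size_drop.
have hsum : size p = (size p1 + size p2 + size p3)%N.
  by rewrite {1}hp123 !size_cat addnA.
have hp' : path ee x (p1 ++ p2 ++ p3) by rewrite -hp123 /p.
have hs' : (size p <= m.+1)%N by rewrite /p.
move: hp' hs'; rewrite !cat_path l1 => /and3P [hp1 hp2 hp3] hs'.
rewrite l1 in l2; rewrite l2 in hp3.
have hlast : last x (p1 ++ p3) = x.
  by rewrite last_cat l1 -l2 -last_cat -l1 -last_cat -hp123 /p last_rcons.
have E2 : Wp A (nth x (x :: t) i) p2 = Wp C (nth x (x :: t) i) p2.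
  apply: IH => //; move: hj => /= hj; lia.
have E13 : Wp A x (p1 ++ p3) = Wp C x (p1 ++ p3).
  apply: IH => //; last by rewrite cat_path hp1 l1 hp3.
  rewrite size_cat; move: hj => /= hj; lia.
rewrite hp123.
move: E13; rewrite !Wp_cat !l1 !l2 E2 => E13.
by rewrite mulrCA E13 mulrCA.
Qed.

End Closed.

End Helpers.
Arguments Wp {F n}.
Arguments Wp_nzA {F n A x p}.
Arguments Wp_nzC {F n A C} H1 {x p}.
Arguments closed_walk {F n A C} H2 {m x p}.

Lemma invmx_diag (F : fieldType) (n : nat) (d : 'rV[F]_n) :
  (forall i, d 0 i != 0) ->
  invmx (diag_mx d) = diag_mx (\row_j (d 0 j)^-1).
Proof.
move=> dnz.
have h : diag_mx d *m diag_mx (\row_j (d 0 j)^-1) = 1%:M.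
  rewrite mulmx_diag -diag_const_mx; congr diag_mx.
  by apply/rowP => j; rewrite !mxE divff.
have [u _] := mulmx1_unit h.
by rewrite -[invmx _]mulmx1 -h mulKmx.
Qed.

Lemma conj_entries (F : fieldType) (n : nat) (d : 'rV[F]_n) (A : 'M[F]_n) :
  (forall i, d 0 i != 0) -> forall i j,
  (diag_mx d *m A *m invmx (diag_mx d)) i j = d 0 i * A i j / d 0 j.
Proof.
by move=> dnz i j; rewrite invmx_diag // mul_mx_diag mul_diag_mx !mxE.
Qed.

Theorem theorem2p9 (F : fieldType) (n : nat) (A C : 'M[F]_n) :
  (exists d : 'rV[F]_n, (forall i, d 0 i != 0) /\
     C = diag_mx d *m A *m invmx (diag_mx d))
  <->
  ((forall i j : 'I_n, A i j != 0 <-> C i j != 0) /\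
   (forall (s : seq 'I_n) (i0 : 'I_n), admissible_cycle A s ->
      cycle_prod A s i0 = cycle_prod C s i0)).
Proof.
split.
  case=> d [dnz ->]; split.
    move=> i j; rewrite conj_entries //.
    by rewrite !mulf_eq0 invr_eq0 (negbTE (dnz i)) (negbTE (dnz j)) /= orbF.
  move=> [|x t] i0 _; first by rewrite /cycle_prod !big_ord0.
  rewrite !cycle_prodE (@Wp_conj F n A _ (fun i => d 0 i) dnz (@conj_entries F n d A dnz)).
  by rewrite last_rcons divff ?mul1r.
case=> H1 H2.
pose e := @ee F n A.
have esy : symmetric e by move=> i j; rewrite /e /ee orbC.
have cs := sym_connect_sym esy.
have ex : forall j, exists p, path e (fingraph.root e j) p && (last (fingraph.root e j) p == j).
  move=> j; have : connect e (fingraph.root e j) j by rewrite cs connect_root.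
  by case/connectP => p hp hl; exists p; rewrite hp -hl eqxx.
pose pj j := xchoose (ex j).
have hpj : forall j, path e (fingraph.root e j) (pj j) /\ last (fingraph.root e j) (pj j) = j.
  by move=> j; have /andP [h1 /eqP h2] := xchooseP (ex j).
pose dd j := Wp A (fingraph.root e j) (pj j) / Wp C (fingraph.root e j) (pj j).
have ddnz : forall j, dd j != 0.
  move=> j; have [h _] := hpj j.
  rewrite /dd mulf_neq0 // ?invr_eq0.
    exact: (Wp_nzA h).
  exact: (Wp_nzC H1 h).
exists (\row_j dd j); split; first by move=> i; rewrite mxE.
apply/matrixP => i j; rewrite conj_entries; last by move=> k; rewrite mxE.
rewrite !mxE.
case: (eqVneq (A i j) 0) => Aij.
  have : ~ (C i j != 0) by move/H1; rewrite Aij eqxx.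
  by rewrite Aij mulr0 mul0r => /negP; rewrite negbK => /eqP.
have Cij : C i j != 0 by apply/H1.
have eij : e i j by rewrite /e /ee Aij.
have rij : fingraph.root e j = fingraph.root e i by apply/esym/(fingraph.rootP cs)/connect1.
have : connect e j (fingraph.root e i) by rewrite -rij connect_root.
case/connectP => q hq hlq.
have [hpi lpi] := hpj i; have [hpjj lpjj] := hpj j.
rewrite /dd rij in hpjj lpjj *.
set r := fingraph.root e i in hpi lpi hpjj lpjj hlq *.
have P1 : path e r (pj i ++ j :: q) by rewrite cat_path hpi lpi /= eij hq.
have L1 : last r (pj i ++ j :: q) = r by rewrite last_cat lpi /= -hlq.
have W1 := closed_walk H2 (leqnn _) P1 L1.
have P2 : path e r (pj j ++ q) by rewrite cat_path hpjj lpjj hq.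
have L2 : last r (pj j ++ q) = r by rewrite last_cat lpjj -hlq.
have W2 := closed_walk H2 (leqnn _) P2 L2.
rewrite !Wp_cat lpi lpjj /= in W1 W2.
have fA : fij A i j = A i j by rewrite /fij Aij.
have fC : fij C i j = C i j by rewrite /fij Cij.
rewrite fA fC in W1.
have nzb := Wp_nzC H1 hpi; have nzd := Wp_nzC H1 hpjj; have nzz := Wp_nzC H1 hq.
have nza := Wp_nzA hpi; have nzg := Wp_nzA hpjj; have nze := Wp_nzA hq.
have Ec : C i j = Wp A r (pj i) * (A i j * Wp A j q) / (Wp C r (pj i) * Wp C j q).
  by rewrite W1; field; rewrite ?nzb ?nzz ?Cij.
have Ez : Wp C j q = Wp A r (pj j) * Wp A j q / Wp C r (pj j).
  by rewrite W2; field; rewrite ?nzd.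
rewrite Ec Ez; field; rewrite ?nzb ?nzd ?nzz ?nzg ?nze ?nza //.
Qed.
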